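(* Let $A$ be an AUF algebra, let $M\in\mathrm{Coh}_{\mathrm L}(A)$, and let $B=\mathrm{End}_{A,-}(M)^{\mathrm{op}}$. Then for each generating idempotent $p\in B$, the map $$\mathrm{End}^0_{-,B}(M)\to\mathrm{End}^0_{-,pBp}(Mp),\qquad S\mapsto S|_{Mp}$$ is a well-defined linear isomorphism.
   Context: All algebras are associative $\mathbb C$-algebras, not necessarily unital. An idempotent is $e$ with $e^2=e$. An algebra $A$ is AUF if there is a family $(e_i)_{i\in\mathfrak I}$ of mutually orthogonal idempotents with $\dim e_iAe_j<\infty$ and $A=\sum_{i,j}e_iAe_j$. A left $A$-module $M$ is quasicoherent if $\xi\in A\xi$ for all $\xi\in M$, coherent if moreover finitely generated; $\mathrm{Coh}_{\mathrm L}(A)$ is the category of coherent left $A$-modules. $B=\mathrm{End}_{A,-}(M)^{\mathrm{op}}$ (a finite-dimensional unital algebra) acts on $M$ on the right by $\xi\cdot T=T(\xi)$; $Mp=\{\xi p:\xi\in M\}$ is a quasicoherent left $A$-submodule with a right $pBp$-action. Irreducible means nonzero with no nonzero proper submodules; for a finite-dimensional unital algebra $B$, an idempotent $p\in B$ is generating if every irreducible left $B$-module on which $1_B$ acts as identity is a quotient of $Bp$. For a quasicoherent left $A$-module $N$: $N^\vee$ is the space of linear functionals $\varphi$ on $N$ for which there is an idempotent $e\in A$ with $\varphi(e\eta)=\varphi(\eta)$ for all $\eta$; $\mathrm{End}^0(N)$ is the span in $\mathrm{End}(N)$ of the operators $\eta\mapsto\varphi(\eta)\xi$ with $\xi\in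 N,\varphi\in N^\vee$; if $N$ carries a right action of an algebra $C$ commuting with $A$, $\mathrm{End}^0_{-,C}(N)=\{T\in\mathrm{End}^0(N): T(\xi c)=T(\xi)c\ \forall \xi,c\}$. *)

(* Defs.v *)
From HB Require Import structures.
From mathcomp Require Import all_boot all_order all_algebra.
From mathcomp Require Import complex.
From mathcomp Require Import Rstruct.
From Stdlib Require Rdefinitions.
Set Implicit Arguments. Unset Strict Implicit. Unset Printing Implicit Defensive.
Import GRing.Theory.
Local Open Scope ring_scope.

Definition CC : fieldType := (Rdefinitions.R)[i].

Definition is_linear (U V : lmodType CC) (f : U -> V) : Prop :=
  forall (c : CC) (x y : U), f (c *: x + y) = c *: f x + f y.

Definition is_linear_on (U V : lmodType CC) (P : U -> Prop) (f : U -> V) : Prop :=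
  forall (c : CC) (x y : U), P x -> P y -> f (c *: x + y) = c *: f x + f y.

Definition is_subspace (V : lmodType CC) (P : V -> Prop) : Prop :=
  P 0 /\ forall (c : CC) (x y : V), P x -> P y -> P (c *: x + y).

Definition in_span (V : lmodType CC) (s : seq V) (v : V) : Prop :=
  exists c : 'I_(size s) -> CC, v = \sum_(k < size s) c k *: s`_k.

Definition fin_dim_set (V : lmodType CC) (S : V -> Prop) : Prop :=
  exists s : seq V, forall v, S v -> in_span s v.

Definition is_algebra (A : lmodType CC) (mul : A -> A -> A) : Prop :=
  (forall a b c, mul a (mul b c) = mul (mul a b) c) /\
  (forall a, is_linear (mul a)) /\
  (forall b, is_linear (fun a => mul a b)).

Definition is_idempotent (A : lmodType CC) (mul : A -> A -> A) (e : A) : Prop :=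
  mul e e = e.

Definition is_AUF (A : lmodType CC) (mul : A -> A -> A) : Prop :=
  exists (I : Type) (e : I -> A),
    (forall i, is_idempotent mul (e i)) /\
    (forall i j, i <> j -> mul (e i) (e j) = 0) /\
    (forall i j, fin_dim_set (fun x => exists a, x = mul (mul (e i) a) (e j))) /\
    (forall a : A, exists (n : nat) (ii jj : 'I_n -> I) (b : 'I_n -> A),
        a = \sum_(k < n) mul (mul (e (ii k)) (b k)) (e (jj k))).

Definition is_left_module (A : lmodType CC) (mul : A -> A -> A)
    (M : lmodType CC) (act : A -> M -> M) : Prop :=
  (forall a, is_linear (act a)) /\
  (forall x, is_linear (fun a => act a x)) /\
  (forall a b x, act (mul a b) x = act a (act b x)).

Definition is_quasicoherent (A M : lmodType CC) (act : A -> M -> M) : Prop :=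
  forall xi : M, exists a : A, act a xi = xi.

Definition is_fin_gen (A M : lmodType CC) (act : A -> M -> M) : Prop :=
  exists s : seq M, forall xi : M,
    exists (c : 'I_(size s) -> CC) (a : 'I_(size s) -> A),
      xi = \sum_(k < size s) (c k *: s`_k + act (a k) s`_k).

Definition is_coherent (A : lmodType CC) (mul : A -> A -> A)
    (M : lmodType CC) (act : A -> M -> M) : Prop :=
  is_left_module mul act /\ is_quasicoherent act /\ is_fin_gen act.

(** ** B = End_{A,-}(M)^op, represented by its underlying set of functions.
    The product of B is b1 * b2 = b2 \o b1 (opposite of composition), and
    B acts on the right of M by xi . T = T xi. *)
Definition in_B (A M : lmodType CC) (act : A -> M -> M) (f : M -> M) : Prop :=
  is_linear f /\ forall a x, f (act a x) = act a (f x).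

(** Left B-modules on which 1_B acts as the identity: for f, g in B,
    (f *_B g) . n = f . (g . n), i.e. bact (g \o f) n = bact f (bact g n). *)
Definition is_unital_left_B_module (A M : lmodType CC) (act : A -> M -> M)
    (N : lmodType CC) (bact : (M -> M) -> N -> N) : Prop :=
  (forall f, in_B act f -> is_linear (bact f)) /\
  (forall (c : CC) f g n, in_B act f -> in_B act g ->
     bact (fun x => c *: f x + g x) n = c *: bact f n + bact g n) /\
  (forall f g n, in_B act f -> in_B act g -> bact (g \o f) n = bact f (bact g n)) /\
  (forall n, bact (fun x => x) n = n).

Definition is_irreducible_B_module (A M : lmodType CC) (act : A -> M -> M)
    (N : lmodType CC) (bact : (M -> M) -> N -> N) : Prop :=
  (exists n : N, n <> 0) /\
  forall Q : N -> Prop,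
    is_subspace Q ->
    (forall f n, in_B act f -> Q n -> Q (bact f n)) ->
    (forall n, Q n -> n = 0) \/ (forall n, Q n).

(** [N] is a quotient of the left B-module Bp = { b *_B p } = { p \o b : b in B },
    on which g in B acts by x |-> g *_B x = x \o g : there is a surjective
    B-linear map Bp -> N. *)
Definition in_Bp (A M : lmodType CC) (act : A -> M -> M) (p x : M -> M) : Prop :=
  exists b, in_B act b /\ x = p \o b.

Definition is_quotient_of_Bp (A M : lmodType CC) (act : A -> M -> M) (p : M -> M)
    (N : lmodType CC) (bact : (M -> M) -> N -> N) : Prop :=
  exists pi : (M -> M) -> N,
    (forall (c : CC) x y, in_Bp act p x -> in_Bp act p y ->
       pi (fun m => c *: x m + y m) = c *: pi x + pi y) /\
    (forall x g, in_Bp act p x -> in_B act g -> pi (x \o g) = bact g (pi x)) /\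
    (forall n : N, exists x, in_Bp act p x /\ pi x = n).

Definition is_generating_idempotent (A M : lmodType CC) (act : A -> M -> M)
    (p : M -> M) : Prop :=
  in_B act p /\ p \o p = p /\
  forall (N : lmodType CC) (bact : (M -> M) -> N -> N),
    is_unital_left_B_module act bact ->
    is_irreducible_B_module act bact ->
    is_quotient_of_Bp act p bact.

(** A quasicoherent A-module N is given as an A-stable subspace [P] of [M]
    (for N = M take P = fun _ => True; for N = Mp take P = image of p).
    Operators on N are represented by functions M -> M, only their values
    on P mattering. *)

Definition in_dual (A : lmodType CC) (mul : A -> A -> A)
    (M : lmodType CC) (act : A -> M -> M) (P : M -> Prop) (phi : M -> CC) : Prop :=
  is_linear_on P phi /\
  exists e : A, is_idempotent mul e /\ forall eta, P eta -> phi (act e eta) = phi eta.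

(** T in End^0(N): T is (on N) a finite sum of operators eta |-> phi(eta) xi
    with xi in N, phi in N^vee (scalars being absorbed into phi). *)
Definition in_End0 (A : lmodType CC) (mul : A -> A -> A)
    (M : lmodType CC) (act : A -> M -> M) (P : M -> Prop) (T : M -> M) : Prop :=
  exists (n : nat) (phi : 'I_n -> M -> CC) (xi : 'I_n -> M),
    (forall k, in_dual mul act P (phi k)) /\ (forall k, P (xi k)) /\
    forall eta, P eta -> T eta = \sum_(k < n) phi k eta *: xi k.

(** Mp = { xi p : xi in M } = { p xi : xi in M }. *)
Definition in_Mp (M : lmodType CC) (p : M -> M) (x : M) : Prop :=
  exists xi, x = p xi.

Definition in_End0_B (A : lmodType CC) (mul : A -> A -> A)
    (M : lmodType CC) (act : A -> M -> M) (S : M -> M) : Prop :=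
  in_End0 mul act (fun _ => True) S /\
  forall f xi, in_B act f -> S (f xi) = f (S xi).

(** End^0_{-,pBp}(Mp): pBp = { p \o b \o p : b in B }, acting on the right
    of Mp by xi . (pbp) = p (b (p xi)). *)
Definition in_End0_pBp (A : lmodType CC) (mul : A -> A -> A)
    (M : lmodType CC) (act : A -> M -> M) (p : M -> M) (T : M -> M) : Prop :=
  in_End0 mul act (in_Mp p) T /\
  forall b xi, in_B act b -> in_Mp p xi -> T (p (b (p xi))) = p (b (p (T xi))).

(* Main.v *)
Require Import Defs.
From HB Require Import structures.
From mathcomp Require Import all_boot all_order all_algebra.
From mathcomp Require Import boolp classical_sets functions.
Set Implicit Arguments. Unset Strict Implicit. Unset Printing Implicit Defensive.
Import GRing.Theory.
Local Open Scope ring_scope.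

Section Lin.
Variables (U V : lmodType CC) (f : U -> V) (hf : is_linear f).
Lemma lin0 : f 0 = 0.
Proof.
have := hf 1 0 0; rewrite scaler0 !addr0 scale1r => h.
by apply: (addrI (f 0)); rewrite addr0 -h.
Qed.
Lemma linD x y : f (x + y) = f x + f y.
Proof. by have := hf 1 x y; rewrite !scale1r. Qed.
Lemma linZ c x : f (c *: x) = c *: f x.
Proof. by have := hf c x 0; rewrite !addr0 lin0 addr0. Qed.
Lemma linN x : f (- x) = - f x.
Proof. by rewrite -scaleN1r linZ scaleN1r. Qed.
Lemma linB x y : f (x - y) = f x - f y.
Proof. by rewrite linD linN. Qed.
Lemma linS n (g : 'I_n -> U) : f (\sum_(i < n) g i) = \sum_(i < n) f (g i).
Proof. by elim/big_rec2: _ => [|i a b _ <-]; rewrite ?lin0 ?linD. Qed.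
End Lin.

Section Fct.
Variables (T : Type) (V : lmodType CC).
Lemma fadd (f g : T -> V) x : (f + g) x = f x + g x. Proof. by []. Qed.
Lemma fscale (c : CC) (f : T -> V) x : (c *: f) x = c *: f x. Proof. by []. Qed.
Lemma fopp (f : T -> V) x : (- f) x = - f x. Proof. by []. Qed.
Lemma fzero x : (0 : T -> V) x = 0. Proof. by []. Qed.
Lemma fsum n (F : 'I_n -> T -> V) x : (\sum_(i < n) F i) x = \sum_(i < n) F i x.
Proof. by elim/big_rec2: _ => // i a b _ <-. Qed.
Lemma fsumS (I : Type) (r : seq I) (F : I -> T -> V) x :
  (\sum_(i <- r) F i) x = \sum_(i <- r) F i x.
Proof. by elim/big_rec2: _ => // i a b _ <-. Qed.
End Fct.
Definition fE := (fadd, fscale, fopp, fzero).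

Section InB.
Variables (A M : lmodType CC) (act : A -> M -> M).
Hypothesis Hact : forall a, is_linear (act a).

Lemma inB_id : in_B act (fun x => x).
Proof. by split. Qed.
Lemma inB_comp f g : in_B act f -> in_B act g -> in_B act (f \o g).
Proof.
move=> [lf af] [lg ag]; split.
  by move=> c x y /=; rewrite lg lf.
by move=> a x /=; rewrite ag af.
Qed.
Lemma inB_lc (c : CC) f g : in_B act f -> in_B act g -> in_B act (c *: f + g).
Proof.
move=> [lf af] [lg ag]; split.
  move=> d x y; rewrite !fE lf lg.
  by rewrite !scalerDr !scalerA mulrC addrACA.
by move=> a x; rewrite !fE af ag Hact.
Qed.
Lemma inB_0 : in_B act 0.
Proof.
split; first by move=> c x y; rewrite !fE scaler0 addr0.
by move=> a x; rewrite !fE lin0.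
Qed.
Lemma inB_add f g : in_B act f -> in_B act g -> in_B act (f + g).
Proof. by move=> hf hg; have := inB_lc 1 hf hg; rewrite scale1r. Qed.
Lemma inB_scale c f : in_B act f -> in_B act (c *: f).
Proof. by move=> hf; have := inB_lc c hf inB_0; rewrite addr0. Qed.
Lemma inB_opp f : in_B act f -> in_B act (- f).
Proof. by move=> hf; rewrite -scaleN1r; apply: inB_scale. Qed.
End InB.

Record goodL (A M : lmodType CC) (act : A -> M -> M) := GoodL {
  gL : (M -> M) -> Prop;
  gB : forall x, gL x -> in_B act x;
  g0 : gL 0;
  gC : forall (c : CC) x y, gL x -> gL y -> gL (c *: x + y);
  gR : forall x g, gL x -> in_B act g -> gL (x \o g) }.

Section Quot.
Variables (A M : lmodType CC) (act : A -> M -> M).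
Hypothesis Hact : forall a, is_linear (act a).
Variable G : goodL act.
Local Notation L := (gL G).
Local Notation inB := (in_B act).
Let inB_0 := inB_0 Hact.
Let inB_add := inB_add Hact.
Let inB_scale := inB_scale Hact.
Let inB_opp := inB_opp Hact.

Lemma LD x y : L x -> L y -> L (x + y).
Proof. by move=> hx hy; have := gC 1 hx hy; rewrite scale1r. Qed.
Lemma LZ c x : L x -> L (c *: x).
Proof. by move=> hx; have := gC c hx (g0 G); rewrite addr0. Qed.
Lemma LN x : L x -> L (- x).
Proof. by move=> hx; rewrite -scaleN1r; apply: LZ. Qed.

Definition cls (x : M -> M) : (M -> M) -> Prop := fun y => L (y - x).
Definition QT := {C : (M -> M) -> Prop | exists x, inB x /\ C = cls x}.
HB.instance Definition _ := gen_eqMixin QT.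
HB.instance Definition _ := gen_choiceMixin QT.

Definition bproj x := if pselect (inB x) then x else 0.
Lemma bprojB x : inB (bproj x).
Proof. rewrite /bproj; destruct (pselect (inB x)) => //; apply: inB_0. Qed.
Lemma bprojE x : inB x -> bproj x = x.
Proof. by rewrite /bproj; destruct (pselect (inB x)). Qed.

Definition mk x : QT := exist _ (cls (bproj x)) (ex_intro _ (bproj x) (conj (bprojB x) erefl)).
Definition repr (C : QT) : M -> M := sval (cid (svalP C)).
Lemma reprB C : inB (repr C).
Proof. by rewrite /repr; case: cid => x [] . Qed.
Lemma reprE C : sval C = cls (repr C).
Proof. by rewrite /repr; case: cid => x [] . Qed.
Lemma mk_repr C : mk (repr C) = C.
Proof.
case: C => C h; rewrite /mk; apply: eq_exist.
rewrite bprojE; last exact: reprB.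
by move: (reprE (exist _ C h)) => /= <-.
Qed.
Lemma QT_ind (P : QT -> Prop) : (forall x, inB x -> P (mk x)) -> forall C, P C.
Proof. by move=> h C; rewrite -(mk_repr C); apply: h; apply: reprB. Qed.

Lemma cls_eq x y : L (x - y) -> cls x = cls y.
Proof.
move=> h; apply: funext => z; apply: propext; rewrite /cls; split => hz.
  have -> : z - y = (z - x) + (x - y) by rewrite addrA subrK.
  by apply: LD.
have -> : z - x = (z - y) + - (x - y) by rewrite opprB addrA subrK.
by apply: LD => //; apply: LN.
Qed.
Lemma cls_eqL x y : cls x = cls y -> L (x - y).
Proof.
move=> h; have : cls y y by rewrite /cls subrr; apply: g0.
by rewrite -h /cls => /LN; rewrite opprB.
Qed.
Lemma mk_eq x y : inB x -> inB y -> (mk x = mk y <-> L (x - y)).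
Proof.
move=> hx hy; split.
  by move=> /(congr1 sval) /=; rewrite !bprojE //; apply: cls_eqL.
by move=> h; apply: eq_exist; rewrite !bprojE //; apply: cls_eq.
Qed.
Lemma repr_mk x : inB x -> L (repr (mk x) - x).
Proof. by move=> hx; apply: cls_eqL; rewrite -reprE /= bprojE. Qed.

Definition qzero := mk 0.
Definition qopp C := mk (- repr C).
Definition qadd C D := mk (repr C + repr D).
Definition qscale (c : CC) C := mk (c *: repr C).

Lemma mk_add x y : inB x -> inB y -> qadd (mk x) (mk y) = mk (x + y).
Proof.
move=> hx hy; apply/mk_eq; do ?apply: inB_add => //; try apply: reprB.
have -> : repr (mk x) + repr (mk y) - (x + y) = (repr (mk x) - x) + (repr (mk y) - y).
  by rewrite opprD addrACA.
by apply: LD; apply: repr_mk.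
Qed.
Lemma mk_opp x : inB x -> qopp (mk x) = mk (- x).
Proof.
move=> hx; apply/mk_eq; do ?apply: inB_opp => //; try apply: reprB.
have -> : - repr (mk x) - - x = - (repr (mk x) - x) by rewrite opprD.
by apply: LN; apply: repr_mk.
Qed.
Lemma mk_scale c x : inB x -> qscale c (mk x) = mk (c *: x).
Proof.
move=> hx; apply/mk_eq; do ?apply: inB_scale => //; try apply: reprB.
by rewrite -scalerBr; apply: LZ; apply: repr_mk.
Qed.

Lemma qaddA : associative qadd.
Proof.
move=> C D E; elim/QT_ind: C => x hx; elim/QT_ind: D => y hy; elim/QT_ind: E => z hz.
by rewrite !mk_add ?addrA //; do ?apply: inB_add.
Qed.
Lemma qaddC : commutative qadd.
Proof.
by move=> C D; elim/QT_ind: C => x hx; elim/QT_ind: D => y hy; rewrite !mk_add // addrC.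
Qed.
Lemma qadd0 : left_id qzero qadd.
Proof. by move=> C; elim/QT_ind: C => x hx; rewrite /qzero mk_add ?add0r //; apply: inB_0. Qed.
Lemma qaddN : left_inverse qzero qopp qadd.
Proof.
move=> C; elim/QT_ind: C => x hx; rewrite mk_opp // mk_add ?addNr //; exact: inB_opp.
Qed.
HB.instance Definition _ := GRing.isZmodule.Build QT qaddA qaddC qadd0 qaddN.

Lemma qscaleA a b v : qscale a (qscale b v) = qscale (a * b) v.
Proof.
elim/QT_ind: v => x hx; rewrite !mk_scale ?scalerA //; exact: inB_scale.
Qed.
Lemma qscale1 : left_id 1 qscale.
Proof. by move=> v; elim/QT_ind: v => x hx; rewrite mk_scale // scale1r. Qed.
Lemma qscaleDr : right_distributive qscale +%R.
Proof.
move=> a u v; elim/QT_ind: u => x hx; elim/QT_ind: v => y hy.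
rewrite /GRing.add /=.
rewrite mk_add // mk_scale; last exact: inB_add.
rewrite !mk_scale // mk_add ?scalerDr //; exact: inB_scale.
Qed.
Lemma qscaleDl v : {morph qscale^~ v : a b / a + b}.
Proof.
move=> a b; elim/QT_ind: v => x hx; rewrite /GRing.add /=.
by rewrite !mk_scale // mk_add ?scalerDl //; apply: inB_scale.
Qed.
HB.instance Definition _ := GRing.Zmodule_isLmodule.Build CC QT qscaleA qscale1 qscaleDr qscaleDl.

Lemma mk_addE x y : inB x -> inB y -> mk x + mk y = mk (x + y).
Proof. exact: mk_add. Qed.
Lemma mk_scaleE c x : inB x -> c *: mk x = mk (c *: x).
Proof. exact: mk_scale. Qed.
Lemma mk_0E : (0 : QT) = mk 0.
Proof. by []. Qed.


Let inB_comp := @inB_comp A M act.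
Let inB_lc := inB_lc Hact.

Definition bact (f : M -> M) (C : QT) : QT := mk (repr C \o f).
Lemma bact_mk f x : inB f -> inB x -> bact f (mk x) = mk (x \o f).
Proof.
move=> hf hx; apply/(mk_eq (inB_comp (reprB _) hf) (inB_comp hx hf)).
have -> : (repr (mk x) \o f) - (x \o f) = (repr (mk x) - x) \o f.
  by apply: funext => z; rewrite /= !fE.
exact: gR (repr_mk hx) hf.
Qed.

Lemma bact_unital : is_unital_left_B_module act bact.
Proof.
split.
  move=> f hf c C D; elim/QT_ind: C => x hx; elim/QT_ind: D => y hy.
  have hcx := inB_scale c hx.
  rewrite (mk_scaleE c hx) (mk_addE hcx hy) !bact_mk //; last exact: inB_add.
  have hxf := inB_comp hx hf; have hyf := inB_comp hy hf.
  by rewrite (mk_scaleE c hxf) (mk_addE (inB_scale c hxf) hyf).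
split.
  move=> c f g n hf hg; elim/QT_ind: n => x hx.
  have hfg : inB (fun z => c *: f z + g z) := inB_lc c hf hg.
  have hxf := inB_comp hx hf; have hxg := inB_comp hx hg.
  rewrite !bact_mk // (mk_scaleE c hxf) (mk_addE (inB_scale c hxf) hxg).
  by congr mk; apply: funext => z; rewrite !fE /= (hx.1).
split.
  move=> f g n hf hg; elim/QT_ind: n => x hx.
  by rewrite !bact_mk //; [exact: inB_comp | exact: inB_comp].
by move=> n; exact: mk_repr n.
Qed.

Hypothesis Hid : ~ L (fun x => x).
Hypothesis Hmax : forall L' : (M -> M) -> Prop,
  (forall x, L' x -> inB x) -> L' 0 ->
  (forall c x y, L' x -> L' y -> L' (c *: x + y)) ->
  (forall x g, L' x -> inB g -> L' (x \o g)) ->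
  (forall x, L x -> L' x) -> (exists x, L' x /\ ~ L x) -> L' (fun x => x).

Lemma mkid_neq0 : mk (fun x => x) <> 0.
Proof.
rewrite mk_0E => /mk_eq h; apply: Hid.
by have := h (inB_id act) inB_0; rewrite subr0.
Qed.

Lemma bact_irr : is_irreducible_B_module act bact.
Proof.
split; first by exists (mk (fun x => x)); exact: mkid_neq0.
move=> Q [Q0 QC] Qst.
case: (pselect (forall n, Q n -> n = 0)) => [h|h]; [by left|right].
move/existsNP: h => [n0 /not_implyP [Qn0 nz]].
have QD a b : Q a -> Q b -> Q (a + b) by move=> qa qb; have := QC 1 a b qa qb; rewrite scale1r.
pose L' y := inB y /\ Q (mk y).
have Lid : L' (fun x => x).
  apply: Hmax.
  - by move=> x [].
  - by split; [exact: inB_0 | rewrite -mk_0E].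
  - move=> c x y [hx qx] [hy qy]; split; first exact: inB_lc.
    by rewrite -(mk_addE (inB_scale c hx) hy) -(mk_scaleE c hx); apply: QC.
  - move=> x g [hx qx] hg; split; first exact: inB_comp.
    by rewrite -bact_mk //; apply: Qst.
  - move=> x hx; have hxB := gB hx; split => //.
    suff -> : mk x = 0 by [].
    by rewrite mk_0E; apply/mk_eq => //; rewrite subr0.
  - exists (repr n0); split; first by split; [exact: reprB | rewrite mk_repr].
    move=> hL; apply: nz; rewrite -(mk_repr n0) mk_0E; apply/mk_eq => //.
      exact: reprB.
    by rewrite subr0.
move=> n; elim/QT_ind: n => x hx.
by have := Qst x _ hx Lid.2; rewrite bact_mk //; exact: inB_id.
Qed.

Lemma no_quot p : inB p -> p \o p = p -> (forall x, inB x -> L (x \o p)) ->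
  ~ is_quotient_of_Bp act p bact.
Proof.
move=> hp pp HpL [pi [_ [piB pisurj]]].
have bp0 C : bact p C = 0.
  elim/QT_ind: C => x hx; rewrite bact_mk // mk_0E; apply/mk_eq.
  - exact: inB_comp.
  - exact: inB_0.
  by rewrite subr0; exact: HpL.
have inBpp : in_Bp act p p by exists (fun x => x); split; [exact: inB_id|].
have pip : pi p = 0 by have := piB p p inBpp hp; rewrite pp bp0.
have b0 b : inB b -> bact b 0 = 0.
  by move=> hb; rewrite mk_0E bact_mk //; exact: inB_0.
apply: mkid_neq0; have [x [[b [hb ->]] <-]] := pisurj (mk (fun x => x)).
by have := piB p b inBpp hb; rewrite pip b0.
Qed.

Lemma not_gen p : inB p -> p \o p = p -> (forall x, inB x -> L (x \o p)) ->
  ~ is_generating_idempotent act p.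
Proof.
move=> hp pp hpl [_ [_ gen]].
exact: no_quot hp pp hpl (gen _ _ bact_unital bact_irr).
Qed.

End Quot.

Section Key.
Variables (A M : lmodType CC) (act : A -> M -> M).
Hypothesis Hact : forall a, is_linear (act a).
Local Notation inB := (in_B act).
Variable p : M -> M.
Let inB_0 := inB_0 Hact.
Let inB_add := inB_add Hact.
Let inB_scale := inB_scale Hact.
Let inB_comp := @inB_comp A M act.

Definition Iset (y : M -> M) := exists s : seq ((M -> M) * (M -> M)),
  (forall bc, List.In bc s -> inB bc.1 /\ inB bc.2) /\
  y = \sum_(bc <- s) (bc.1 \o p \o bc.2).

Lemma I0 : Iset 0.
Proof. by exists [::]; split => //; rewrite big_nil. Qed.

Lemma IC c x y : Iset x -> Iset y -> Iset (c *: x + y).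
Proof.
move=> [sx [hx ex]] [sy [hy ey]].
exists ([seq (c *: bc.1, bc.2) | bc <- sx] ++ sy); split.
  move=> bc /List.in_app_iff [/List.in_map_iff [bc' [<- /hx [h1 h2]]]|/hy //].
  by split => //; apply: inB_scale.
by rewrite big_cat big_map ex ey scaler_sumr; congr (_ + _).
Qed.

Lemma IR x g : Iset x -> inB g -> Iset (x \o g).
Proof.
move=> [sx [hx ex]] hg.
exists [seq (bc.1, bc.2 \o g) | bc <- sx]; split.
  move=> bc /List.in_map_iff [bc' [<- /hx [h1 h2]]]; split => //.
  exact: inB_comp.
rewrite big_map ex; apply: funext => z /=; rewrite !fsumS.
by apply: eq_bigr.
Qed.

Lemma IB x : Iset x -> inB p -> inB x.
Proof.
move=> [s [hs ->]] hp; elim: s hs => [|bc s IH] hs.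
  by rewrite big_nil; apply: inB_0.
rewrite big_cons; apply: inB_add => //.
  have [h1 h2] := hs bc (or_introl erefl).
  by apply: inB_comp => //; apply: inB_comp.
by apply: IH => bc' h; apply: hs; right.
Qed.

Lemma Ip x : inB x -> Iset (x \o p).
Proof.
move=> hx; exists [:: (x, fun z => z)]; split.
  by move=> bc [<-|[]]; split => //; apply: inB_id.
by rewrite big_seq1.
Qed.

Definition goodS (S : (M -> M) -> Prop) :=
  (forall x, S x -> inB x) /\ S 0 /\
  (forall c x y, S x -> S y -> S (c *: x + y)) /\
  (forall x g, S x -> inB g -> S (x \o g)).

Lemma key : is_generating_idempotent act p ->
  exists s : seq ((M -> M) * (M -> M)),
    (forall bc, List.In bc s -> inB bc.1 /\ inB bc.2) /\
    forall x, x = \sum_(bc <- s) bc.1 (p (bc.2 x)).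
Proof.
move=> hgen; have [hp [pp _]] := hgen.
suff [s [hs e]] : Iset (fun x => x).
  exists s; split => // x.
  rewrite {1}(congr1 (fun F => F x) e) /= fsumS; by apply: eq_bigr.
case: (pselect (Iset (fun x => x))) => // nI; exfalso.
pose P (S : set (M -> M)) := S = set0 \/ (goodS S /\ (forall x, Iset x -> S x) /\ ~ S (fun x => x)).
have gI : goodS Iset.
  split; first by move=> x hx; apply: IB.
  split; first exact: I0.
  split; first by move=> c x y; apply: IC.
  by move=> x g; apply: IR.
have [S [PS Smax]] : exists S, P S /\ forall B, (S `<` B)%classic -> ~ P B.
  apply: Zorn_bigcup => F FP Ftot.
  case: (pselect (exists X, F X /\ X <> set0)) => [[X0 [FX0 X0n]]|hF]; last first.
    left; apply: funext => x; apply: propext; split => // -[X FX Xx].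
    apply: hF; exists X; split => //; move=> X0; by rewrite X0 in Xx.
  have goodF X : F X -> forall x, X x -> goodS X /\ (forall x, Iset x -> X x) /\ ~ X (fun x => x).
    move=> FX x Xx; case: (FP X FX) => // X0'; by rewrite X0' in Xx.
  have [gX0 [IX0 nX0]] : goodS X0 /\ (forall x, Iset x -> X0 x) /\ ~ X0 (fun x => x).
    by case: (FP X0 FX0).
  right; split; last split.
  - split; first by move=> x [X FX Xx]; have [[h _] _] := goodF X FX x Xx; exact: h.
    split; first by exists X0 => //; exact: gX0.2.1.
    split.
      move=> c x y [X1 FX1 X1x] [X2 FX2 X2y].
      have [g1 _] := goodF X1 FX1 x X1x; have [g2 _] := goodF X2 FX2 y X2y.
      case: (Ftot X1 X2 FX1 FX2) => sub.
        by exists X2 => //; apply: g2.2.2.1 => //; apply: sub.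
      by exists X1 => //; apply: g1.2.2.1 => //; apply: sub.
    move=> x g [X FX Xx] hg; have [gX _] := goodF X FX x Xx.
    by exists X => //; apply: gX.2.2.2.
  - by move=> x hx; exists X0 => //; apply: IX0.
  - by move=> [X FX Xx]; have [_ [_ h]] := goodF X FX _ Xx.
case: PS => [S0|[gS [IS nS]]].
  apply: (Smax Iset); last by right.
  rewrite S0; split => // h; exact: (h 0 I0).
have [SB [S0 [SC SR]]] := gS.
pose G := @GoodL A M act S SB S0 SC SR.
apply: (@not_gen A M act Hact G nS _ p hp pp) => //.
  move=> L' L'B L'0 L'C L'R SL' [x [L'x nSx]].
  case: (pselect (L' (fun x => x))) => // nL'; exfalso.
  apply: (Smax L'); last first.
    right; split; first by split.
    by split => // y hy; apply: SL'; apply: IS.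
  split => // h; exact: nSx (h x L'x).
by move=> x hx; apply: IS; apply: Ip.
Qed.

End Key.

Lemma linSS (U V : lmodType CC) (f : U -> V) (X : Type) (s : seq X) (g : X -> U) :
  is_linear f -> f (\sum_(a <- s) g a) = \sum_(a <- s) f (g a).
Proof. by move=> hf; elim/big_rec2: _ => [|i a b _ <-]; rewrite ?(lin0 hf) ?(linD hf). Qed.

Lemma big_eq_In (V : lmodType CC) (X : Type) (s : seq X) (F G : X -> V) :
  (forall a, List.In a s -> F a = G a) -> \sum_(a <- s) F a = \sum_(a <- s) G a.
Proof.
elim: s => [|a s IH] h; first by rewrite !big_nil.
rewrite !big_cons (h a (or_introl erefl)) IH //.
by move=> b hb; apply: h; right.
Qed.

Section End0.
Variables (A : lmodType CC) (mul : A -> A -> A) (M : lmodType CC) (act : A -> M -> M).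
Variable P : M -> Prop.

Lemma End0_lin T : in_End0 mul act P T ->
  forall c x y, P x -> P y -> P (c *: x + y) -> T (c *: x + y) = c *: T x + T y.
Proof.
move=> [n [phi [xi [hphi [hxi hT]]]]] c x y px py pxy; rewrite !hT //.
rewrite scaler_sumr -big_split; apply: eq_bigr => k _.
by rewrite (hphi k).1 // scalerDl scalerA.
Qed.

Lemma End0_ext T1 T2 : (forall x, T1 x = T2 x) -> in_End0 mul act P T1 -> in_End0 mul act P T2.
Proof.
move=> e [n [phi [xi [hphi [hxi hT]]]]]; exists n, phi, xi; split => //; split => //.
by move=> eta he; rewrite -e hT.
Qed.

Lemma End0_0 : in_End0 mul act P (fun _ => 0).
Proof.
exists 0%N, (fun _ _ => 0), (fun _ => 0); split; first by case.
split; first by case.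
by move=> eta _; rewrite big_ord0.
Qed.

Lemma End0_add T1 T2 : in_End0 mul act P T1 -> in_End0 mul act P T2 ->
  in_End0 mul act P (fun x => T1 x + T2 x).
Proof.
move=> [n1 [phi1 [xi1 [h1 [x1 e1]]]]] [n2 [phi2 [xi2 [h2 [x2 e2]]]]].
exists (n1 + n2)%N, (fun j => match fintype.split j with inl a => phi1 a | inr b => phi2 b end),
  (fun j => match fintype.split j with inl a => xi1 a | inr b => xi2 b end).
split; first by move=> j; case: (fintype.split j).
split; first by move=> j; case: (fintype.split j).
move=> eta he; rewrite big_split_ord /= e1 // e2 //; congr (_ + _); apply: eq_bigr => j _.
  by rewrite (unsplitK (inl j)).
by rewrite (unsplitK (inr j)).
Qed.

Lemma End0_sum (X : Type) (s : seq X) (F : X -> M -> M) :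
  (forall a, List.In a s -> in_End0 mul act P (F a)) ->
  in_End0 mul act P (fun x => \sum_(a <- s) F a x).
Proof.
elim: s => [|a s IH] h.
  by apply: (End0_ext _ End0_0) => x; rewrite big_nil.
apply: (End0_ext (T1 := fun x => F a x + \sum_(b <- s) F b x)).
  by move=> x; rewrite big_cons.
apply: End0_add; first by apply: h; left.
by apply: IH => b hb; apply: h; right.
Qed.
End End0.

Theorem proposition11p5
  (A : lmodType CC) (mul : A -> A -> A) (M : lmodType CC) (act : A -> M -> M)
  (p : M -> M) :
  is_algebra mul -> is_AUF mul -> is_coherent mul act ->
  is_generating_idempotent act p ->
  (* well-defined: S maps Mp into Mp and S|_{Mp} lies in End^0_{-,pBp}(Mp) *)
  (forall S, in_End0_B mul act S ->
     (forall x, in_Mp p x -> in_Mp p (S x)) /\ in_End0_pBp mul act p S) /\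
  (* injective *)
  (forall S1 S2, in_End0_B mul act S1 -> in_End0_B mul act S2 ->
     (forall x, in_Mp p x -> S1 x = S2 x) -> forall x, S1 x = S2 x) /\
  (* surjective *)
  (forall T, in_End0_pBp mul act p T ->
     exists S, in_End0_B mul act S /\ forall x, in_Mp p x -> S x = T x).
Proof.
move=> _ _ [[Hact _] _] hgen.
have [hp [pp _]] := hgen.
have ppx y : p (p y) = p y by have := congr1 (fun f => f y) pp.
have plin := hp.1.
have [s [hs dec]] := key Hact hgen.
have End0T T : in_End0 mul act (fun _ => True) T -> is_linear T.
  by move=> hT c x y; apply: (End0_lin hT).
split.
  move=> S [hS Scomm].
  have SMp y : S (p y) = p (S (p y)) by rewrite Scomm // ppx.
  split; first by move=> _ [y ->]; exists (S (p y)); apply: SMp.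
  split.
    have [n [phi [xi [hphi [hxi hT]]]]] := hS.
    exists n, phi, (fun k => p (xi k)); split.
      move=> k; have [hl [e [he1 he2]]] := hphi k; split.
        by move=> c x y _ _; apply: hl.
      by exists e; split => // eta _; apply: he2.
    split; first by move=> k; exists (xi k).
    move=> _ [y ->]; rewrite SMp hT // (linS plin); apply: eq_bigr => k _.
    by rewrite (linZ plin).
  move=> b xi hb _; by rewrite (Scomm p) // (Scomm b) // (Scomm p).
split.
  move=> S1 S2 [h1 c1] [h2 c2] agree x.
  rewrite (dec x) (linSS _ _ (End0T _ h1)) (linSS _ _ (End0T _ h2)).
  apply: big_eq_In => bc /hs [hb1 hb2].
  by rewrite c1 // c2 // agree //; exists (bc.2 x).
move=> T [hT Tcomm].
have Tid y : T (p y) = p (T (p y)).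
  have := Tcomm (fun z => z) (p y) (inB_id act) (ex_intro _ y erefl).
  by rewrite /= !ppx => ->; rewrite ppx.
have Tlin c x y : in_Mp p x -> in_Mp p y -> T (c *: x + y) = c *: T x + T y.
  move=> [x' ->] [y' ->]; apply: (End0_lin hT); [by exists x'|by exists y'|].
  by exists (c *: x' + y'); rewrite plin.
have T0 : T 0 = 0.
  have h0 : in_Mp p 0 by exists 0; rewrite (lin0 plin).
  have := Tlin 1 0 0 h0 h0; rewrite scaler0 addr0 scale1r => h.
  by apply: (addrI (T 0)); rewrite addr0 -h.
have TS (X : Type) (r : seq X) (F : X -> M) : T (\sum_(a <- r) p (F a)) = \sum_(a <- r) T (p (F a)).
  elim: r => [|a r IH]; first by rewrite !big_nil.
  rewrite !big_cons -IH -{1}[p (F a)]scale1r Tlin ?scale1r //; first by exists (F a).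
  by exists (\sum_(b <- r) F b); rewrite (linSS _ _ plin).
have Tg g y : in_B act g -> T (p (g (p y))) = p (g (T (p y))).
  move=> hg; have := Tcomm g (p y) hg (ex_intro _ y erefl).
  by rewrite ppx => ->; rewrite -Tid.
pose S x := \sum_(bc <- s) bc.1 (T (p (bc.2 x))).
exists S; split.
  split.
    apply: End0_sum => bc /hs [hb1 hb2].
    have [n [phi [xi [hphi [hxi hTe]]]]] := hT.
    exists n, (fun k x => phi k (p (bc.2 x))), (fun k => bc.1 (xi k)); split.
      move=> k; have [hl [e [he1 he2]]] := hphi k; split.
        by move=> c x y _ _ /=; rewrite hb2.1 plin; apply: (hl c (p (bc.2 x)) (p (bc.2 y))); [exists (bc.2 x)|exists (bc.2 y)].
      exists e; split => // x _ /=; rewrite hb2.2 hp.2; apply: he2; by exists (bc.2 x).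
    split; first by [].
    move=> x _ /=; rewrite hTe; last by exists (bc.2 x).
    rewrite (linS hb1.1); apply: eq_bigr => k _; by rewrite (linZ hb1.1).
  move=> f x hf; rewrite /S.
  have E1 g : in_B act g -> T (p (g x)) = \sum_(bc <- s) p (g (bc.1 (T (p (bc.2 x))))).
    move=> hg; rewrite {1}(dec x) (linSS _ _ hg.1) (linSS _ _ plin).
    rewrite (TS _ s (fun bc => g (bc.1 (p (bc.2 x))))); apply: big_eq_In => bc /hs [hb1 hb2].
    exact: (Tg (g \o bc.1) (bc.2 x) (inB_comp hg hb1)).
  rewrite (linSS _ _ hf.1).
  transitivity (\sum_(bc <- s) \sum_(bc' <- s) bc.1 (p (bc.2 (f (bc'.1 (T (p (bc'.2 x))))))))%R.
    apply: big_eq_In => bc /hs [hb1 hb2].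
    have := E1 (bc.2 \o f) (inB_comp hb2 hf); rewrite /= => ->.
    by rewrite (linSS _ _ hb1.1).
  rewrite exchange_big; apply: big_eq_In => bc' _.
  by rewrite -dec.
move=> x [y ->]; rewrite /S.
transitivity (\sum_(bc <- s) bc.1 (p (bc.2 (T (p y)))))%R.
  by apply: big_eq_In => bc /hs [hb1 hb2]; rewrite Tg.
by rewrite -dec.
Qed.
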